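(* Let $b$ and $c$ be integers with $b > c > 1$, let $m = 2b+c$, and let $f(x) = x^{2b+c} + x^{b+c} + x^{b} + x^{c} + 1 \in \mathbb{F}_2[x]$. There is a fixed, input-independent straight-line program using no AND operations and exactly $6b+3c-2 = 3m-2$ two-input XOR operations, of XOR depth $3$ (i.e. time delay $3T_X$), which, on input the coefficient bits $d_0,\dots,d_{2m-2}$ of an arbitrary polynomial $D(x)=\sum_{i=0}^{2m-2} d_i x^i \in \mathbb{F}_2[x]$ of degree at most $2m-2$, outputs the $m$ coefficient bits of the remainder of $D$ upon division by $f$ (the unique polynomial of degree less than $m$ congruent to $D$ modulo $f$).
   Context: A straight-line program (bit-parallel circuit) over $\mathbb{F}_2$ here is a sequence of gates, each computing the XOR (sum in $\mathbb{F}_2$) of two values that are either input bits or outputs of earlier gates; each output bit is an input bit or a gate output. The number of XOR operations is the number of gates. $T_X$ denotes the delay of one 2-input XOR gate, and the time delay of the program is $T_X$ times the maximum number of gates on any path from an input to an output. *)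

(* Defs.v *)
From mathcomp Require Import all_boot all_order all_algebra.
Set Implicit Arguments. Unset Strict Implicit. Unset Printing Implicit Defensive.
Import GRing.Theory.
Local Open Scope ring_scope.

(* A straight-line program over F_2 with [n] inputs.
   Wires are numbered by nat: wires 0 .. n-1 are the input bits, wire n+k is
   the output of gate k.  Gate k is a pair (i, j) of wires and computes
   wire_i + wire_j (XOR); it may only use inputs or earlier gates. *)
Record slp := SLP { slp_gates : seq (nat * nat); slp_outs : seq nat }.

Definition slp_wf (n : nat) (P : slp) : Prop :=
  (forall k, (k < size (slp_gates P))%N ->
     let g := nth (0%N, 0%N) (slp_gates P) k in
     (g.1 < n + k)%N /\ (g.2 < n + k)%N) /\
  (forall o, o \in slp_outs P -> (o < n + size (slp_gates P))%N).

Definition slp_xors (P : slp) : nat := size (slp_gates P).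

Definition slp_wires (n : nat) (P : slp) (x : nat -> 'F_2) : seq 'F_2 :=
  foldl (fun vs g => rcons vs (nth 0 vs g.1 + nth 0 vs g.2))
        [seq x i | i <- iota 0 n] (slp_gates P).

Definition slp_out (n : nat) (P : slp) (x : nat -> 'F_2) (j : nat) : 'F_2 :=
  nth 0 (slp_wires n P x) (nth 0%N (slp_outs P) j).

Definition slp_wire_depths (n : nat) (P : slp) : seq nat :=
  foldl (fun ds g => rcons ds (maxn (nth 0%N ds g.1) (nth 0%N ds g.2)).+1)
        (nseq n 0%N) (slp_gates P).

(* XOR depth of the program: max over outputs of the wire depth;
   time delay = slp_depth * T_X *)
Definition slp_depth (n : nat) (P : slp) : nat :=
  \max_(o <- slp_outs P) nth 0%N (slp_wire_depths n P) o.

Definition pentanomial (b c : nat) : {poly 'F_2} :=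
  'X^(2 * b + c) + 'X^(b + c) + 'X^b + 'X^c + 1.

(* Main.v *)
Require Import Defs.
From mathcomp Require Import all_boot all_order all_algebra.
From mathcomp Require Import zify ring.
Import GRing.Theory.
Local Open Scope ring_scope.

Section Gen.
Variables (b c : nat).
Local Open Scope nat_scope.
Definition mm := 2 * b + c.
Definition nn := 2 * mm - 1.
Definition hw k := mm + k.
Definition uw k := nn + k.
Definition vw i := if i <= b - 2 then nn + b + i else mm + i.
Definition pw j := nn + (2 * b - 1) + j.
Definition ew j := nn + (2 * b - 1) + mm + (j - (b + c)).
Definition ow j := nn + (2 * b - 1) + mm + (c - 1) + j.
Definition NG := 2 * b - 1 + mm + (c - 1) + mm.

Definition gate (k : nat) : nat * nat :=
  if k < b then (hw k, hw (k + b))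
  else if k < 2 * b - 1 then (hw (k - b), hw (k - b + (b + c)))
  else if k < 2 * b - 1 + mm then
    let j := k - (2 * b - 1) in
    if j < c then (j, hw (j + (b + c)))
    else if j < b + c then (j, uw (j - c))
    else if j < b + 2 * c - 1 then (j, hw (j + b - c))
    else (j, vw (j - (b + c)))
  else if k < 2 * b - 1 + mm + (c - 1) then
    let j := k - (2 * b - 1 + mm) + (b + c) in (vw (j - (b + c)), vw (j - b))
  else
    let j := k - (2 * b - 1 + mm + (c - 1)) in
    if j < c then (pw j, uw j)
    else if j < b then (pw j, vw j)
    else if j < b + c then (pw j, vw (j - b))
    else if j < b + 2 * c - 1 then (pw j, ew j)
    else (pw j, vw (j - b)).

Variables (T : Type) (op : T -> T -> T) (leaf : nat -> T).
Definition hv k := leaf (mm + k).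
Definition uv k := op (hv k) (hv (k + b)).
Definition vv i := if i <= b - 2 then op (hv i) (hv (i + (b + c))) else hv i.
Definition pv j :=
  if j < c then op (leaf j) (hv (j + (b + c)))
  else if j < b + c then op (leaf j) (uv (j - c))
  else if j < b + 2 * c - 1 then op (leaf j) (hv (j + b - c))
  else op (leaf j) (vv (j - (b + c))).
Definition ev j := op (vv (j - (b + c))) (vv (j - b)).
Definition ov j :=
  if j < c then op (pv j) (uv j)
  else if j < b then op (pv j) (vv j)
  else if j < b + c then op (pv j) (vv (j - b))
  else if j < b + 2 * c - 1 then op (pv j) (ev j)
  else op (pv j) (vv (j - b)).
Definition wval i :=
  if i < nn then leaf i else
  let k := i - nn in
  if k < b then uv k
  else if k < 2 * b - 1 then vv (k - b)
  else if k < 2 * b - 1 + mm then pv (k - (2 * b - 1))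
  else if k < 2 * b - 1 + mm + (c - 1) then ev (k - (2 * b - 1 + mm) + (b + c))
  else ov (k - (2 * b - 1 + mm + (c - 1))).

Hypotheses (hcb : c < b) (hc : 1 < c).
Lemma vw_bound i : vw i <= nn + (2 * b - 2) \/ vw i = mm + i.
Proof. rewrite /vw; case: (leqP i (b - 2)) => H; [left; rewrite /nn /mm; lia|by right]. Qed.
Ltac mlia := repeat match goal with |- context[vw ?i] => have := vw_bound i; generalize (vw i) => ? end;
  unfold NG, hw, uw, pw, ew, ow in *; unfold nn in *; unfold mm in *; lia.

Lemma val_leaf i : i < nn -> wval i = leaf i.
Proof. by rewrite /wval => ->. Qed.
Lemma val_hw k : k < mm - 1 -> wval (hw k) = hv k.
Proof. rewrite /wval /hw /hv /nn /mm => H; case: ifP => //; mlia. Qed.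
Lemma val_uw k : k < b -> wval (uw k) = uv k.
Proof. rewrite /wval /uw => H; case: ifP => [|_]; first mlia. by rewrite addKn H. Qed.
Lemma val_vw i : i < mm - 1 -> wval (vw i) = vv i.
Proof.
rewrite /vw /vv => H; case: leqP => Hi.
  rewrite /wval; case: ifP => [|_]; first mlia.
  rewrite -addnA addKn; case: ifP => [|_]; first mlia.
  case: ifP => [_|]; last mlia. by rewrite addKn /vv Hi.
by rewrite val_hw.
Qed.
Lemma val_pw j : j < mm -> wval (pw j) = pv j.
Proof.
rewrite /wval /pw => H; case: ifP => [|_]; first mlia.
rewrite -!addnA addKn; do 2 (case: ifP => [|_]; first mlia).
case: ifP => [_|]; last mlia. by rewrite addKn.
Qed.
Lemma val_ew j : b + c <= j -> j < b + 2 * c - 1 -> wval (ew j) = ev j.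
Proof.
rewrite /wval /ew => H1 H2; case: ifP => [|_]; first mlia.
rewrite -!addnA addKn; do 3 (case: ifP => [|_]; first mlia).
case: ifP => [_|]; last mlia. f_equal; mlia.
Qed.
Lemma val_ow j : j < mm -> wval (ow j) = ov j.
Proof.
rewrite /wval /ow => H; case: ifP => [|_]; first mlia.
rewrite -!addnA addKn; do 4 (case: ifP => [|_]; first mlia).
by rewrite !addnA addKn.
Qed.

Lemma val_nn k : wval (nn + k) =
  if k < b then uv k
  else if k < 2 * b - 1 then vv (k - b)
  else if k < 2 * b - 1 + mm then pv (k - (2 * b - 1))
  else if k < 2 * b - 1 + mm + (c - 1) then ev (k - (2 * b - 1 + mm) + (b + c))
  else ov (k - (2 * b - 1 + mm + (c - 1))).
Proof. by rewrite /wval ltnNge leq_addr /= addKn. Qed.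

Ltac fin := cbn [fst snd]; split; [mlia | split; [mlia | rewrite ?val_hw ?val_uw ?val_vw ?val_pw ?val_ew ?val_leaf; try mlia]].

Lemma gate_ok k : k < NG -> (gate k).1 < nn + k /\ (gate k).2 < nn + k /\
   wval (nn + k) = op (wval (gate k).1) (wval (gate k).2).
Proof.
move=> HK; rewrite val_nn /gate /=.
case: ifP => H1; first by fin.
case: ifP => H2.
  fin. by rewrite /vv ifT //; mlia.
case: ifP => H3.
  rewrite /pv; case: ifP => H4; first by fin.
  case: ifP => H5; first by fin.
  case: ifP => H6; first by fin.
  by fin.
case: ifP => H7.
  by fin.
rewrite /ov; case: ifP => H8; first by fin.
case: ifP => H9; first by fin.
case: ifP => H10; first by fin.
case: ifP => H11; first by fin.
by fin.
Qed.

End Gen.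

Lemma foldl_gen (T : Type) (op : T -> T -> T) (d : T) (n : nat)
  (gs : seq (nat * nat)) (w : nat -> T) :
  (forall k, (k < size gs)%N -> ((nth (0,0)%N gs k).1 < n + k)%N /\
     ((nth (0,0)%N gs k).2 < n + k)%N /\
     w (n + k)%N = op (w (nth (0,0)%N gs k).1) (w (nth (0,0)%N gs k).2)) ->
  foldl (fun vs g => rcons vs (op (nth d vs g.1) (nth d vs g.2)))
     [seq w i | i <- iota 0 n] gs = [seq w i | i <- iota 0 (n + size gs)].
Proof.
elim/last_ind: gs => [|gs g IH] H; first by rewrite addn0.
rewrite foldl_rcons IH; last first.
  move=> k hk; have := H k; rewrite size_rcons nth_rcons hk; apply; exact: ltnW.
have := H (size gs); rewrite size_rcons nth_rcons ltnn eqxx => /(_ (ltnSn _)) [h1 [h2 h3]].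
rewrite addnS -addn1 (iotaD 0 (n + size gs) 1) map_cat /= -cats1 add0n; congr (_ ++ [:: _]).
by rewrite !(nth_map 0%N) ?size_iota // !nth_iota // !add0n h3.
Qed.

Lemma F2two : (2 : 'F_2) = 0.
Proof. by have := addrr_pchar2 (pchar_Fp (isT : prime 2)) (1 : 'F_2). Qed.

Section Vals.
Variables (b c : nat).
Hypotheses (hcb : (c < b)%N) (hc : (1 < c)%N).
Variable R : fieldType.
Hypothesis two0 : (2 : R) = 0.
Variable x : nat -> R.
Hypothesis hx : forall i, (2 * mm b c - 1 <= i)%N -> x i = 0.

Local Notation m := (mm b c).
Definition qf i := x (m + i) + x (m + (i + b)) + x (m + (i + (b + c))).
Definition rr j := x j + qf j + (if (c <= j)%N then qf (j - c) else 0)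
   + (if (b <= j)%N then qf (j - b) else 0)
   + (if (b + c <= j)%N then qf (j - (b + c)) else 0).

Ltac nlia := unfold mm in *; lia.
Ltac splitifs := repeat match goal with |- context [if ?cond then _ else _] =>
   case: (boolP cond) => ?; try (exfalso; nlia) end.
Ltac zero_x := repeat match goal with |- context[x ?a] => rewrite (hx a); [|nlia] end.
Ltac unify_x := repeat match goal with |- context[x ?a] => match goal with |- context[x ?b] =>
   assert_fails (constr_eq a b);
   let E := fresh in assert (E : x a = x b) by (f_equal; nlia); rewrite E; clear E end end.
Lemma char2_eq (a b' : R) : a + b' = 0 -> a = b'.
Proof.
move=> h; have hb : b' + b' = 0 by rewrite -[b' + b']/(b' *+ 2) -mulr_natl two0 mul0r.
have : a - b' = (a + b') - (b' + b') by ring.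
by rewrite h hb subr0 => /eqP; rewrite subr_eq0 => /eqP.
Qed.
Ltac kill t :=
  match goal with |- ?S = 0 => let P := eval pattern t in S in match P with ?F _ =>
   let E := fresh in
   ((have E : F t = F 0 + 2 * t by (cbv beta; ring)) ||
    (have E : F t = F 0 + 2 * (2 * t) by (cbv beta; ring)) ||
    (have E : F t = F 0 + 2 * (3 * t) by (cbv beta; ring)));
   rewrite E two0 mul0r addr0; clear E; cbv beta end end.
Ltac cancel2 := apply: char2_eq;
  repeat match goal with |- context[x ?a] => let t := fresh "t" in move: (x a) => t; kill t end;
  ring.
Ltac f2 := splitifs; zero_x; unify_x; cancel2.

Lemma ov_rr j : (j < m)%N -> @ov b c R +%R x j = rr j.
Proof.
move=> hj; rewrite /ov /pv /uv /ev /vv /hv /rr /qf.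
f2.
Qed.

Definition pent : {poly R} := 'X^m + 'X^(b + c) + 'X^b + 'X^c + 1.

Lemma size_pent : (m < size pent)%N.
Proof.
have Hc : pent`_m = 1.
  rewrite /pent !coefD !coefXn coef1 eqxx.
  have -> : (m == b + c)%N = false by apply/negP => /eqP; nlia.
  have -> : (m == b)%N = false by apply/negP => /eqP; nlia.
  have -> : (m == c)%N = false by apply/negP => /eqP; nlia.
  have -> : (m == 0)%N = false by apply/negP => /eqP; nlia.
  by rewrite !addr0.
rewrite ltnNge; apply/negP => H; move: (nth_default 0 H).
by rewrite Hc => /eqP; rewrite oner_eq0.
Qed.

Lemma mod_rr (D : {poly R}) (hD : forall i, x i = D`_i) j :
  (j < m)%N -> (D %% pent)`_j = rr j.
Proof.
move=> hj.
pose Q := \poly_(i < m) qf i.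
pose Rp := \poly_(i < m) rr i.
have Qc i : Q`_i = qf i.
  rewrite coef_poly; case: ifP => // /negbT Hi.
  by rewrite /qf !hx ?addr0 //; nlia.
have Rc i : Rp`_i = if (i < m)%N then rr i else 0 by rewrite coef_poly.
have E : D = Q * pent + Rp.
  apply/polyP => t; rewrite -hD /pent !mulrDr mulr1 !coefD !coefMXn !Qc Rc /rr /qf.
  f2.
rewrite E modp_addl_mul_small ?Rc ?hj //.
exact: leq_ltn_trans (size_poly _ _) size_pent.
Qed.

End Vals.

Theorem theorem2 (b c : nat) (hcb : (c < b)%N) (hc : (1 < c)%N) :
  let m := (2 * b + c)%N in
  exists P : slp,
    [/\ slp_wf (2 * m - 1) P,
        size (slp_outs P) = m,
        slp_xors P = (6 * b + 3 * c - 2)%N,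
        slp_depth (2 * m - 1) P = 3%N &
        forall D : {poly 'F_2}, (size D <= 2 * m - 1)%N ->
          forall j, (j < m)%N ->
            slp_out (2 * m - 1) P (fun i => D`_i) j = (D %% pentanomial b c)`_j].
Proof.
move=> m.
exists (SLP (mkseq (gate b c) (NG b c)) (mkseq (ow b c) (mm b c))).
have Hn : (2 * m - 1)%N = nn b c by [].
split.
- split.
    move=> k; rewrite /= size_mkseq => hk; rewrite nth_mkseq //.
    by have [h1 [h2 _]] := gate_ok b c nat addn (fun i => i) hcb hc k hk.
  move=> o /= /mapP [j]; rewrite mem_iota size_mkseq => /andP [_ hj] ->.
  rewrite /ow /NG /nn; rewrite /mm in hj *; lia.
- by rewrite /= size_mkseq.
- rewrite /slp_xors /= size_mkseq /NG /mm; lia.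
- rewrite /slp_depth /slp_wire_depths /= Hn.
  pose dop := fun a b : nat => (maxn a b).+1.
  have -> : nseq (nn b c) 0%N = [seq wval b c nat dop (fun _ => 0%N) i | i <- iota 0 (nn b c)].
    apply/(@eq_from_nth _ 0%N); first by rewrite size_nseq size_map size_iota.
    move=> i; rewrite size_nseq => hi.
    by rewrite nth_nseq hi (nth_map 0%N) ?size_iota // nth_iota // add0n val_leaf.
  rewrite (@foldl_gen nat dop 0%N); last first.
    move=> k; rewrite size_mkseq => hk; rewrite nth_mkseq //; exact: gate_ok.
  rewrite size_mkseq /mkseq big_map.
  rewrite (eq_big_seq (fun j => @ov b c nat dop (fun _ => 0%N) j)); last first.
    move=> j; rewrite mem_iota add0n => /andP [_ hj].
    rewrite (nth_map 0%N) ?size_iota ?nth_iota; last 2 first.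
      by rewrite /ow /NG /nn; rewrite /mm in hj *; lia.
      by rewrite /ow /NG /nn; rewrite /mm in hj *; lia.
    by rewrite add0n val_ow.
  apply/eqP; rewrite eqn_leq; apply/andP; split.
    apply/bigmax_leqP_seq => j _ _.
    rewrite /ov /pv /ev /uv /vv /hv /dop; repeat case: ifP => _; lia.
  apply: (bigmaxn_sup_seq c) => //; first by rewrite mem_iota add0n /mm; apply/andP; split => //; lia.
  rewrite /ov /pv /ev /uv /vv /hv /dop ltnn hcb.
  have -> : (c < b + c)%N by lia.
  case: ifP => _; lia.
- move=> D hD j hj.
  rewrite /slp_out /slp_wires /= Hn.
  have -> : [seq D`_i | i <- iota 0 (nn b c)] =
      [seq wval b c _ +%R (fun i => D`_i) i | i <- iota 0 (nn b c)].
    by apply/eq_in_map => i; rewrite mem_iota add0n => /andP [_ hi]; rewrite val_leaf.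
  rewrite foldl_gen; last first.
    move=> k; rewrite size_mkseq => hk; rewrite nth_mkseq //; exact: gate_ok.
  rewrite size_mkseq !nth_mkseq //; last first.
    by rewrite /ow /NG /nn; rewrite /mm in hj *; lia.
  rewrite val_ow //.
  have hx : forall i, (2 * mm b c - 1 <= i)%N -> D`_i = 0.
    by move=> i hi; apply: nth_default; apply: leq_trans hD hi.
  rewrite (ov_rr b c hcb hc _ F2two _ hx) //.
  symmetry; exact: (mod_rr b c hcb hc _ F2two _ hx).
Qed.
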